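(* Let $\mathcal P$ be a finite set with $|\mathcal P|=n$, $\kappa\in(0,1)$, $\lambda>0$, $\ell_1,\ell_2,\dots:\mathcal P\to[0,1]$, $\mu_1(i)=\kappa$ for all $i$, $\Gamma$ the set of $\kappa$-dense measures on $\mathcal P$, and for $t\ge1$, $\mu_{t+1}=\Pi_\Gamma\tilde\mu_{t+1}$ with $\tilde\mu_{t+1}(i)=e^{-\lambda\sum_{s=1}^t\ell_s(i)}\mu_1(i)$. Writing $M(\hat\mu,Q_t)=\mathbb{E}_{i\sim\hat\mu}[\ell_t(i)]$, for every $T$ and every $\mu\in\Gamma$, \[ \sum_{t=1}^TM(\hat\mu_{t+1},Q_t)\le\sum_{t=1}^TM(\hat\mu,Q_t)+\frac{\mathrm{KL}(\mu\|\mu_1)}{\lambda\kappa n}. \]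
   Context: A measure on $\mathcal P$ is $\mu:\mathcal P\to[0,1]$; $|\mu|=\sum_i\mu(i)$; $\kappa$-dense means $|\mu|/n\ge\kappa$; $\hat\mu=\mu/|\mu|$. $\mathrm{KL}(\mu_1\|\mu_2)=\sum_i\mu_1(i)\log(\mu_1(i)/\mu_2(i))+\mu_2(i)-\mu_1(i)$. $\Pi_\Gamma\tilde\mu=\arg\min_{\mu\in\Gamma}\mathrm{KL}(\mu\|\tilde\mu)$. $Q_t$ is the column strategy of round $t$, inducing loss vector $\ell_t$. *)

(* Defs.v *)
From HB Require Import structures.
From mathcomp Require Import all_boot all_order all_algebra.
From mathcomp Require Import all_classical all_reals all_analysis.
Set Implicit Arguments. Unset Strict Implicit. Unset Printing Implicit Defensive.
Import Order.TTheory GRing.Theory Num.Theory.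
Local Open Scope ring_scope.

Section Defs.
Variables (R : realType) (P : finType).

Definition is_measure (mu : P -> R) : Prop := forall i, 0 <= mu i <= 1.

Definition mass (mu : P -> R) : R := \sum_(i : P) mu i.

Definition kdense (kappa : R) (mu : P -> R) : Prop :=
  is_measure mu /\ kappa <= mass mu / #|P|%:R.

Definition normalize (mu : P -> R) : P -> R := fun i => mu i / mass mu.

(* generalized KL divergence; the term mu1 i * ln (..) is 0 when mu1 i = 0 *)
Definition KL (mu1 mu2 : P -> R) : R :=
  \sum_(i : P) (mu1 i * ln (mu1 i / mu2 i) + mu2 i - mu1 i).

Definition is_KL_proj (kappa : R) (mut mu : P -> R) : Prop :=
  kdense kappa mu /\ forall nu, kdense kappa nu -> KL mu mut <= KL nu mut.

Definition Mloss (muhat lt : P -> R) : R := \sum_(i : P) muhat i * lt i.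

End Defs.

(* Main.v *)
Require Import Defs.
From HB Require Import structures.
From mathcomp Require Import all_boot all_order all_algebra.
From mathcomp Require Import all_classical all_reals all_analysis.
From mathcomp Require Import ring lra.
Import Order.TTheory GRing.Theory Num.Theory.
Local Open Scope ring_scope.

Lemma ln_le_sub1 (R : realType) (y : R) : 0 < y -> ln y <= y - 1.
Proof.
move=> y0; have := @le_ln1Dx R (y - 1).
have -> : 1 + (y - 1) = y by ring.
apply; lra.
Qed.

Lemma xln_ge (R : realType) (a k : R) : 0 <= a -> 0 < k -> a - k <= a * ln (a / k).
Proof.
move=> a0 k0; have [->|ap] := eqVneq a 0; first by rewrite mul0r; lra.
have a1 : 0 < a by rewrite lt_def ap.
have h := ln_le_sub1 _ _ (divr_gt0 k0 a1).
rewrite !ln_div ?posrE // in h *.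
have e : a * (k / a) = k by field.
have := ler_wpM2l (ltW a1) h. idtac.
rewrite !mulrBr mulr1 e => h2.
lra.
Qed.

Lemma KL_ge0 (R : realType) (P : finType) (x m : P -> R) :
  (forall i, 0 <= x i) -> (forall i, 0 < m i) -> 0 <= KL x m.
Proof.
move=> hx hm; rewrite /KL; apply: sumr_ge0 => i _.
have := xln_ge _ _ _ (hx i) (hm i); lra.
Qed.

Lemma KL_shift (R : realType) (P : finType) (x m E : P -> R) :
  (forall i, 0 <= x i) -> (forall i, 0 < m i) -> (forall i, 0 < E i) ->
  KL x (fun i => E i * m i) =
  KL x m - \sum_i x i * ln (E i) + \sum_i (E i * m i - m i).
Proof.
move=> hx hm hE; rewrite /KL -sumrB -big_split /=; apply: eq_bigr => i _.
have [->|ap] := eqVneq (x i) 0; first by rewrite !mul0r; ring.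
have a1 : 0 < x i by rewrite lt_def ap hx.
rewrite !ln_div ?posrE ?mulr_gt0 // lnM ?posrE //; ring.
Qed.

Lemma scal_ineq (R : realType) (a d k : R) : 0 <= a -> 1 <= d -> 0 < k ->
  (d - 1) * (a - k) <=
  (d * a * ln (d * a / k) + k - d * a) - (a * ln (a / k) + k - a).
Proof.
move=> a0 d1 k0.
have [->|ap] := eqVneq a 0; first by rewrite !mulr0 !mul0r; nra.
have a1 : 0 < a by rewrite lt_def ap a0.
have d0 : 0 < d by lra.
have -> : d * a / k = d * (a / k) by rewrite mulrA.
rewrite lnM ?posrE ?divr_gt0 //.
have h1 := xln_ge _ _ _ a0 k0.
have h2 := xln_ge _ _ _ (ltW d0) ltr01.
rewrite divr1 in h2.
have h3 := ler_wpM2l (ltW a1) h2.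
have h4 : 0 <= d - 1 by lra.
have h5 := ler_wpM2l h4 h1.
nra.
Qed.

Lemma KL_scale (R : realType) (P : finType) (x y m : P -> R) (k d : R) :
  0 < k -> 1 <= d -> (forall i, m i = k) -> (forall i, 0 <= y i) ->
  (forall i, x i = d * y i) -> mass y = #|P|%:R * k -> KL y m <= KL x m.
Proof.
move=> k0 d1 hm hy hx hmass.
rewrite -subr_ge0 /KL -sumrB.
apply: (@le_trans _ _ (\sum_i (d - 1) * (y i - k))).
  rewrite -mulr_sumr sumrB.
  have -> : \sum_(i : P) k = #|P|%:R * k by rewrite sumr_const mulr_natl.
  by rewrite -hmass /mass subrr mulr0.
apply: ler_sum => i _; rewrite hx hm; exact: scal_ineq.
Qed.

Lemma btl (R : realType) (P : finType) (kappa lambda : R)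
  (l : nat -> P -> R) (mu : nat -> P -> R) :
  0 < kappa -> 0 < lambda ->
  (forall i, mu 1%N i = kappa) ->
  (forall t, (1 <= t)%N ->
     is_KL_proj kappa
       (fun i => expR (- lambda * \sum_(1 <= s < t.+1) l s i) * mu 1%N i)
       (mu t.+1)) ->
  forall (T : nat) (u : P -> R), kdense kappa u ->
    \sum_(1 <= t < T.+1) Mloss (mu t.+1) (l t)
    <= KL u (mu 1%N) / lambda + \sum_i u i * \sum_(1 <= s < T.+1) l s i.
Proof.
move=> hk hl hmu1 hproj.
have hm1 : forall i, 0 < mu 1%N i by move=> i; rewrite hmu1.
have pos : forall x : P -> R, kdense kappa x -> forall i : P, 0 <= x i.
  by move=> x hx i; move: hx; rewrite /kdense /is_measure => -[hx _]; case/andP: (hx i).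
elim=> [|T IH] u hu.
  rewrite big_geq // big1 ?addr0; last by move=> i _; rewrite big_geq // mulr0.
  apply: divr_ge0; last exact: ltW.
  exact: KL_ge0 _ _ _ _ (pos _ hu) hm1.
rewrite big_nat_recr //=.
have [hd hmin] := hproj T.+1 isT.
apply: le_trans (lerD (IH _ hd) (lexx (Mloss (mu T.+2) (l T.+1)))) _.
set L := fun i => \sum_(1 <= s < T.+2) l s i.
have hsplit : forall x : P -> R, \sum_i x i * L i =
   \sum_i x i * \sum_(1 <= s < T.+1) l s i + Mloss x (l T.+1).
  move=> x; rewrite /Mloss -big_split /=; apply: eq_bigr => i _.
  by rewrite /L big_nat_recr //= mulrDr.
have hE : forall i, 0 < expR (- lambda * L i) by move=> i; exact: expR_gt0.
have key : forall x, kdense kappa x ->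
  KL x (fun i => expR (- lambda * L i) * mu 1%N i) =
  KL x (mu 1%N) + lambda * \sum_i x i * L i
  + \sum_i (expR (- lambda * L i) * mu 1%N i - mu 1%N i).
  move=> x hx; rewrite (KL_shift _ _ _ _ _ (pos _ hx) hm1 hE).
  congr (_ + _); rewrite mulr_sumr -sumrN; congr (_ + _).
  by apply: eq_bigr => i _; rewrite expRK; ring.
have := hmin u hu; rewrite /L in key; rewrite !key // lerD2r => h.
rewrite -addrA -hsplit.
have e : forall a b : R, a / lambda + b = (a + lambda * b) / lambda.
  by move=> a b; field; rewrite gt_eqF.
rewrite !e; apply: ler_wpM2r => //; rewrite invr_ge0; exact: ltW.
Qed.

Theorem mainTheorem8 (R : realType) (P : finType) (kappa lambda : R)
  (l : nat -> P -> R) (mu : nat -> P -> R) :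
  0 < kappa < 1 -> 0 < lambda ->
  (forall t i, (1 <= t)%N -> 0 <= l t i <= 1) ->
  (forall i, mu 1%N i = kappa) ->
  (forall t, (1 <= t)%N ->
     is_KL_proj kappa
       (fun i => expR (- lambda * \sum_(1 <= s < t.+1) l s i) * mu 1%N i)
       (mu t.+1)) ->
  forall (T : nat) (nu : P -> R), kdense kappa nu ->
    \sum_(1 <= t < T.+1) Mloss (normalize (mu t.+1)) (l t)
    <= \sum_(1 <= t < T.+1) Mloss (normalize nu) (l t)
       + KL nu (mu 1%N) / (lambda * kappa * #|P|%:R).
Proof.
move=> /andP[hk hk1] hl hlb hmu1 hproj T nu hnu.
have pos : forall x : P -> R, kdense kappa x -> forall i : P, 0 <= x i.
  by move=> x hx i; move: hx; rewrite /kdense /is_measure => -[hx _]; case/andP: (hx i).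
have le1 : forall x : P -> R, kdense kappa x -> forall i : P, x i <= 1.
  by move=> x hx i; move: hx; rewrite /kdense /is_measure => -[hx _]; case/andP: (hx i).
have hm1 : forall i, 0 < mu 1%N i by move=> i; rewrite hmu1.
set n : R := #|P|%:R.
have n0 : 0 < n.
  rewrite /n ltr0n lt0n; apply/negP => /eqP h.
  move: hnu; rewrite /kdense h invr0 mulr0 => -[_ h']; lra.
have dmass : forall x : P -> R, kdense kappa x -> kappa * n <= mass x.
  by move=> x; rewrite /kdense -ler_pdivlMr // => -[_ ->].
set M := mass nu.
have hM : kappa * n <= M by exact: dmass.
have kn0 : 0 < kappa * n by exact: mulr_gt0.
have M0 : 0 < M by lra.
set c := kappa * n / M.
have c0 : 0 <= c by apply: divr_ge0; lra.
have c1 : c <= 1 by rewrite /c ler_pdivrMr // mul1r.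
set nu' := fun i => c * nu i.
have mass' : mass nu' = kappa * n.
  rewrite /mass /nu' -mulr_sumr -/(mass nu) -/M /c; field; lra.
have hnu' : kdense kappa nu'.
  split.
    move=> i; apply/andP; split; first by apply: mulr_ge0 => //; exact: pos hnu i.
    apply: mulr_ile1 => //; [exact: pos hnu i | exact: le1 hnu i].
  rewrite mass' mulrK //; exact: unitf_gt0.
have hbtl := btl _ _ _ _ _ _ hk hl hmu1 hproj T nu' hnu'.
have hKL : KL nu' (mu 1%N) <= KL nu (mu 1%N).
  apply: (KL_scale _ _ _ _ _ kappa (M / (kappa * n)) hk) => //.
  - by rewrite ler_pdivlMr // mul1r.
  - by move=> i; apply: mulr_ge0 => //; exact: pos hnu i.
  - by move=> i; rewrite /nu' /c; field; rewrite ?(gt_eqF M0) ?(gt_eqF n0) ?(gt_eqF hk) ?(gt_eqF kn0) ?(gt_eqF hl).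
  - by rewrite mass' mulrC.
set S := \sum_(1 <= t < T.+1) Mloss (normalize nu) (l t).
have hlin : \sum_i nu' i * \sum_(1 <= s < T.+1) l s i = kappa * n * S.
  rewrite /S mulr_sumr.
  under eq_bigr => j _ do rewrite mulr_sumr.
  rewrite exchange_big /=; apply: eq_bigr => s _.
  rewrite /Mloss mulr_sumr; apply: eq_bigr => j _.
  rewrite /normalize /nu' /c -/M; field; by rewrite ?(gt_eqF M0) ?(gt_eqF n0) ?(gt_eqF hk) ?(gt_eqF kn0) ?(gt_eqF hl).
have hLHS : forall t, (1 <= t < T.+1)%N ->
    Mloss (normalize (mu t.+1)) (l t) <= Mloss (mu t.+1) (l t) / (kappa * n).
  move=> t /andP[t1 _].
  have [hd _] := hproj t t1.
  have X0 : 0 <= Mloss (mu t.+1) (l t).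
    apply: sumr_ge0 => i _; apply: mulr_ge0; first exact: pos hd i.
    by case/andP: (hlb t i t1).
  have Mm := dmass _ hd.
  have -> : Mloss (normalize (mu t.+1)) (l t) = Mloss (mu t.+1) (l t) / mass (mu t.+1).
    by rewrite /Mloss /normalize mulr_suml; apply: eq_bigr => i _; rewrite mulrAC.
  apply: ler_wpM2l => //; rewrite lef_pV2 ?posrE //; lra.
apply: le_trans (ler_sum_nat hLHS) _.
rewrite -mulr_suml.
have ki : 0 <= (kappa * n)^-1 by rewrite invr_ge0 ltW.
apply: le_trans (ler_wpM2r ki hbtl) _.
rewrite hlin.
have -> : (KL nu' (mu 1%N) / lambda + kappa * n * S) / (kappa * n)
  = S + KL nu' (mu 1%N) / (lambda * kappa * n).
  by field; rewrite ?(gt_eqF M0) ?(gt_eqF n0) ?(gt_eqF hk) ?(gt_eqF kn0) ?(gt_eqF hl).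
rewrite lerD2l; apply: ler_wpM2r => //.
rewrite invr_ge0; apply: ltW; rewrite -mulrA; exact: mulr_gt0.
Qed.
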